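(* Let $G$ be a connected bipartite graph with bipartition $V(G)=X \cup Y$, $|X|=s$ and $|Y|=t$, let $m$ be the number of edges and $\beta$ the matching number of $G$. If $0\leq \alpha \leq 1$, then $$S_k(A_{\alpha}(G))\geq \frac{\alpha m}{2}\left(\frac{1}{s}+\frac{1}{t}\right)+\frac{(1-\alpha)m}{\sqrt{st}}+(k-1)\left(\alpha -\frac{2(1-\alpha)\sqrt{st}}{s+t}\right)$$ for $1\leq k \leq \beta+1$.
   Context: All graphs are simple and undirected. $A_{\alpha}(G)=\alpha D(G)+(1-\alpha)A(G)$, where $A(G)$ is the adjacency matrix and $D(G)$ the diagonal degree matrix. For a real symmetric matrix $M$ with eigenvalues $\lambda_1(M)\geq\cdots\geq\lambda_n(M)$, $S_k(M)=\sum_{i=1}^k\lambda_i(M)$. The matching number is the maximum size of a matching. *)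

(* Defs.v *)
From HB Require Import structures.
From mathcomp Require Import all_boot all_order all_algebra.
From mathcomp Require Import reals.
Set Implicit Arguments. Unset Strict Implicit. Unset Printing Implicit Defensive.
Import Order.TTheory GRing.Theory Num.Theory.
Local Open Scope ring_scope.

Definition simple_graph (T : finType) (e : rel T) : Prop :=
  symmetric e /\ irreflexive e.

Definition connected_graph (T : finType) (e : rel T) : Prop :=
  forall x y : T, connect e x y.

Definition bipartition (T : finType) (e : rel T) (X Y : {set T}) : Prop :=
  [/\ X :&: Y = set0, X :|: Y = setT &
      forall x y, e x y -> (x \in X /\ y \in Y) \/ (x \in Y /\ y \in X)].

Definition edges (T : finType) (e : rel T) : {set {set T}} :=
  [set E : {set T} | [exists x, exists y, e x y && (E == [set x; y])]].

Definition nedges (T : finType) (e : rel T) : nat := #|edges e|.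

Definition is_matching (T : finType) (e : rel T) (M : {set {set T}}) : bool :=
  (M \subset edges e) &&
  [forall E1 in M, forall E2 in M, (E1 != E2) ==> [disjoint E1 & E2]].

Definition matching_number (T : finType) (e : rel T) : nat :=
  \max_(M : {set {set T}} | is_matching e M) #|M|.

Definition degree (T : finType) (e : rel T) (v : T) : nat := #|[set u | e v u]|.

Definition adjmx (R : nzRingType) (T : finType) (e : rel T) : 'M[R]_#|T| :=
  \matrix_(i, j) (if e (enum_val i) (enum_val j) then 1 else 0).

Definition degmx (R : nzRingType) (T : finType) (e : rel T) : 'M[R]_#|T| :=
  \matrix_(i, j) (if i == j then (degree e (enum_val i))%:R else 0).

Definition Aalpha (R : nzRingType) (T : finType) (e : rel T) (alpha : R)
  : 'M[R]_#|T| := alpha *: degmx R e + (1 - alpha) *: adjmx R e.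

Definition eigen_list (R : realDomainType) (n : nat) (M : 'M[R]_n)
  (l : seq R) : Prop :=
  sorted >=%R l /\ char_poly M = \prod_(x <- l) ('X - x%:P).

Definition Sk (R : realDomainType) (l : seq R) (k : nat) : R :=
  \sum_(i < k) l`_i.

(* Main.v *)
Require Import Defs.
From HB Require Import structures.
From mathcomp Require Import all_boot all_order all_algebra.
From mathcomp Require Import reals.
From mathcomp Require Import complex.
From mathcomp Require Import ring lra zify.
Import Order.TTheory GRing.Theory Num.Theory.
Set Implicit Arguments. Unset Strict Implicit. Unset Printing Implicit Defensive.
Local Open Scope ring_scope.

Lemma rearr (R : realFieldType) n (l : seq R) (r w : 'I_n -> R) k :
  sorted >=%R l -> perm_eq l [seq r j | j <- enum 'I_n] ->
  (forall j, 0 <= w j <= 1) -> \sum_j w j = k%:R -> (0 < k)%N -> (k <= n)%N ->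
  \sum_j r j * w j <= \sum_(i < k) l`_i.
Proof.
move=> so pl w01 sw k0 kn.
have szl : size l = n by rewrite (perm_size pl) size_map size_enum_ord.
set c := l`_k.-1.
pose g (x : R) := Num.max (x - c) 0.
have h1 : forall j, r j * w j <= c * w j + g (r j).
  move=> j; have /andP[w0 w1] := w01 j.
  rewrite /g; case: (lerP 0 (r j - c)) => hc.
    nra.
  nra.
apply: le_trans (ler_sum _ (fun j _ => h1 j)) _.
rewrite big_split /= -mulr_sumr sw.
have -> : \sum_(j < n) g (r j) = \sum_(x <- l) g x.
  by rewrite (perm_big _ pl) big_map big_enum.
rewrite (big_nth 0) szl (@big_cat_nat _ _ _ k 0 n _ _ (leq0n _) kn) /=.
have lo : forall i, (k <= i < n)%N -> g l`_i = 0.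
  move=> i /andP[ki ilt]; apply/max_idPr; rewrite subr_le0.
  apply: (sorted_leq_nth (leT := >=%R) _ _ 0 so); rewrite ?inE ?szl //.
  - by move=> a b d /= h h'; exact: le_trans h' h.
  - by move=> a /=.
  - lia.
  - lia.
rewrite (eq_big_nat _ _ lo) big1_eq addr0.
have hi : forall i, (0 <= i < k)%N -> g l`_i = l`_i - c.
  move=> i /andP[_ ik]; apply/max_idPl; rewrite subr_ge0.
  apply: (sorted_leq_nth (leT := >=%R) _ _ 0 so); rewrite ?inE ?szl //.
  - by move=> a b d /= h h'; exact: le_trans h' h.
  - by move=> a /=.
  - lia.
  - lia.
  - lia.
rewrite (eq_big_nat _ _ hi) big_mkord sumrB sumr_const card_ord.
rewrite -[c *+ k]mulr_natr; lra.
Qed.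

Lemma char_poly_similar (F : fieldType) n (U A : 'M[F]_n) :
  U \in unitmx -> char_poly (invmx U *m A *m U) = char_poly A.
Proof.
move=> Uu; rewrite /char_poly /char_poly_mx !map_mxM.
set pc := map_mx polyC.
have {1}-> : ('X%:M : 'M[{poly F}]_n) = pc (invmx U) *m 'X%:M *m pc U.
  by rewrite scalar_mxC -mulmxA -map_mxM mulVmx // map_mx1 mulmx1.
rewrite -mulmxBl -mulmxBr !det_mulmx !det_map_mx mulrC mulrA -rmorphM.
by rewrite -det_mulmx mulmxV // det1 rmorph1 mul1r.
Qed.

Section Spec.
Variable R : realType.
Notation C := (complex.complex R).
Notation phi := (real_complex R).

Lemma zconj (z : C) : z * Num.conj z = phi (complex.Re z ^+ 2 + complex.Im z ^+ 2).
Proof.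
case: z => a b; apply/eqP; rewrite complex.eq_complex /=.
by apply/andP; split; apply/eqP; ring.
Qed.

Lemma phiB (a b : R) : phi (a - b) = phi a - phi b.
Proof. exact: rmorphB. Qed.
Lemma phi1 : phi 1 = 1.
Proof. exact: rmorph1. Qed.
Lemma phiM (a b : R) : phi (a * b) = phi a * phi b.
Proof. exact: rmorphM. Qed.

Lemma phitr n (A : 'M[R]_n) : phi (\tr A) = \tr (map_mx phi A).
Proof. by rewrite trace_map_mx. Qed.

Lemma phisum n (F : 'I_n -> R) : phi (\sum_j F j) = \sum_j phi (F j).
Proof. by rewrite rmorph_sum. Qed.

Lemma trc {m p} (A : 'M[R]_(m, p)) : ((map_mx phi A) ^t*)%sesqui = (map_mx phi A)^T.
Proof. by apply/matrixP => i j; rewrite !mxE; exact: conjc_real. Qed.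

Lemma spec_data n (M : 'M[R]_n) (l : seq R) :
  M^T = M -> char_poly M = \prod_(x <- l) ('X - x%:P) ->
  exists r : 'I_n -> R, perm_eq l [seq r j | j <- enum 'I_n] /\
   forall k (P : 'M[R]_(k,n)), P *m P^T = 1%:M ->
     exists w : 'I_n -> R, (forall j, 0 <= w j <= 1) /\ \sum_j w j = k%:R /\
       \tr (P *m M *m P^T) = \sum_j r j * w j.
Proof.
move=> Msym cpM.
set Mc := map_mx phi M.
have Mn : Mc \is normalmx.
  by apply/normalmxP; rewrite trc /Mc map_trmx Msym.
have Mdec := orthomx_spectralP Mn.
set U := spectralmx Mc in Mdec; set D := spectral_diag Mc in Mdec.
have Uu : U \is unitarymx := spectral_unitarymx Mc.
have Uunit := unitarymx_unit Uu.
have iU : invmx U = (U ^t*)%sesqui := invmx_unitary Uu.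
have cpMc : char_poly Mc = \prod_(x <- map phi l) ('X - x%:P).
  by rewrite -map_char_poly cpM map_prod_XsubC big_map.
have cpD : char_poly Mc = \prod_(x <- [seq D 0 j | j <- enum 'I_n]) ('X - x%:P).
  rewrite {1}Mdec char_poly_similar // char_poly_trig ?diag_mx_is_trig //.
  by rewrite big_map big_enum /=; apply: eq_bigr => j _; rewrite mxE eqxx mulr1n.
have pe := prod_XsubC_eq (etrans (esym cpMc) cpD).
have Dr : forall j, D 0 j = phi (complex.Re (D 0 j)).
  move=> j; have : D 0 j \in map phi l by rewrite (perm_mem pe) map_f // mem_enum.
  by case/mapP => x _ ->.
exists (fun j => complex.Re (D 0 j)); split.
  apply: (perm_map_inj (@complexI R)); rewrite -map_comp.
  by rewrite (eq_map (g := fun j => D 0 j)) // => j /=; rewrite -Dr.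
move=> k P PP.
set Pc := map_mx phi P.
set Q := Pc *m (U ^t*)%sesqui.
have PcT : (Pc ^t*)%sesqui = Pc^T := trc P.
have UU : (U ^t*)%sesqui *m U = 1%:M by rewrite -iU mulVmx.
have Qt : (Q ^t*)%sesqui = U *m Pc^T.
  by rewrite /Q trmx_mul map_mxM trmxCK PcT.
have QQ : Q *m (Q ^t*)%sesqui = 1%:M.
  rewrite Qt /Q -mulmxA (mulmxA _ U) UU mul1mx /Pc map_trmx -map_mxM PP.
  by rewrite map_mx1.
pose w j := \sum_(i < k) (complex.Re (Q i j) ^+ 2 + complex.Im (Q i j) ^+ 2).
have wQ : forall j, phi (w j) = \sum_i Q i j * Num.conj (Q i j).
  by move=> j; rewrite rmorph_sum; apply: eq_bigr => i _; rewrite zconj.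
exists w; split; last split.
- move=> j; apply/andP; split.
    by apply: sumr_ge0 => i _; apply: addr_ge0; apply: sqr_ge0.
  set Pi := (Q ^t*)%sesqui *m Q.
  have PiPi : Pi *m Pi = Pi.
    by rewrite /Pi mulmxA -(mulmxA _ Q) QQ mulmx1.
  have Pit : (Pi ^t*)%sesqui = Pi by rewrite /Pi trmx_mul map_mxM trmxCK.
  set E := 1%:M - Pi.
  have Et : (E ^t*)%sesqui = E.
    by rewrite /E linearB /= trmx1 raddfB /= map_mx1 Pit.
  have EE : E *m (E ^t*)%sesqui = E.
    by rewrite Et /E mulmxBl !mulmxBr !mul1mx mulmx1 PiPi subrr subr0.
  have : 0 <= E j j.
    rewrite -EE mxE; apply: sumr_ge0 => i _; rewrite !mxE.
    exact: mul_conjC_ge0.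
  have -> : E j j = phi (1 - w j).
    rewrite phiB phi1 (wQ j) /E !mxE eqxx mulr1n; congr (_ - _).
    by apply: eq_bigr => i _; rewrite !mxE mulrC.
  by rewrite ler0c subr_ge0.
- apply: (@complexI R); rewrite rmorph_sum rmorph_nat.
  rewrite (eq_bigr _ (fun j _ => wQ j)).
  rewrite exchange_big /=.
  transitivity (\tr (Q *m (Q ^t*)%sesqui)); last by rewrite QQ mxtrace_scalar.
  rewrite /mxtrace; apply: eq_bigr => i _; rewrite !mxE; apply: eq_bigr => j _.
  by rewrite !mxE.
- apply: (@complexI R); rewrite phitr phisum.
  rewrite !map_mxM -map_trmx -/Pc -/Mc Mdec iU.
  have -> : Pc *m ((U ^t*)%sesqui *m diag_mx D *m U) *m Pc^T
      = Q *m diag_mx D *m (Q ^t*)%sesqui by rewrite Qt /Q !mulmxA.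
  rewrite /mxtrace.
  transitivity (\sum_i \sum_j Q i j * D 0 j * Num.conj (Q i j)).
    apply: eq_bigr => i _; rewrite !mxE; apply: eq_bigr => j _.
    by rewrite mul_mx_diag !mxE.
  rewrite exchange_big /=; apply: eq_bigr => j _.
  rewrite phiM wQ -Dr mulr_sumr; apply: eq_bigr => i _.
  by rewrite mulrAC mulrC.
Qed.
End Spec.

Lemma kyfan (R : realType) n (M : 'M[R]_n) l k (P : 'M[R]_(k, n)) :
  M^T = M -> eigen_list M l -> P *m P^T = 1%:M -> (0 < k)%N ->
  \tr (P *m M *m P^T) <= Sk l k.
Proof.
move=> Msym [so cp] PP k0.
have [r [pr H]] := spec_data Msym cp.
have [w [w01 [sw ->]]] := H k P PP.
have kn : (k <= n)%N.
  have := mxrankM_maxl P P^T; rewrite PP mxrank1 => /leq_trans; apply.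
  exact: rank_leq_col.
exact: rearr so pr w01 sw k0 kn.
Qed.

Section Graph.
Variables (R : realType) (T : finType) (e : rel T) (X Y : {set T}).
Hypotheses (esym : symmetric e) (eirr : irreflexive e) (bip : bipartition e X Y).

Definition ip (g h : T -> R) := \sum_w g w * h w.

Lemma ipC g h : ip g h = ip h g.
Proof. by apply: eq_bigr => w _; rewrite mulrC. Qed.

Lemma sum_delta (u : T) (H : T -> R) : \sum_w (w == u)%:R * H w = H u.
Proof.
rewrite (bigD1 u) //= eqxx mul1r big1 ?addr0 // => w /negbTE ->.
by rewrite mul0r.
Qed.

Lemma card_sum (A : {set T}) : \sum_w (w \in A)%:R = #|A|%:R :> R.
Proof.
rewrite -sum1_card natr_sum [RHS]big_mkcond /=.
by apply: eq_bigr => w _; case: (w \in A).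
Qed.

Lemma degE v : (degree e v)%:R = \sum_w (e v w)%:R :> R.
Proof.
rewrite /degree -sum1_card natr_sum big_mkcond /=.
by apply: eq_bigr => w _; rewrite inE; case: (e v w).
Qed.

Lemma cardS (Pr : T -> T -> bool) :
  (#|[set p : T * T | Pr p.1 p.2]|)%:R = \sum_v \sum_w (Pr v w)%:R :> R.
Proof.
rewrite pair_bigA /= -sum1_card natr_sum big_mkcond /=.
by apply: eq_bigr => [[v w]] _; rewrite inE /=; case: (Pr v w).
Qed.

Lemma inY w : (w \in Y) = (w \notin X).
Proof.
case: bip => XY0 XYT _.
case h: (w \in X) => /=.
  apply/negP => hy; have : w \in X :&: Y by rewrite inE h hy.
  by rewrite XY0 inE.
have : w \in X :|: Y by rewrite XYT inE.
by rewrite inE h.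
Qed.

Definition Mf alpha v w : R :=
  alpha * ((v == w)%:R * (degree e v)%:R) + (1 - alpha) * (e v w)%:R.
Definition q alpha (g : T -> R) := \sum_v \sum_w g v * Mf alpha v w * g w.
Definition Pm k (f : 'I_k -> T -> R) : 'M[R]_(k, #|T|) :=
  \matrix_(i < k, j < #|T|) f i (enum_val j).

Lemma reidx (G : T -> R) : \sum_(c < #|T|) G (enum_val c) = \sum_v G v.
Proof. by rewrite -(big_enum_val (A := T)). Qed.

Lemma Aalpha_entry alpha c d :
  @Aalpha R T e alpha c d = Mf alpha (enum_val c) (enum_val d).
Proof.
rewrite /Aalpha /Mf !mxE (inj_eq enum_val_inj).
by case: eqP => [->|_]; case: (e _ _); rewrite ?mul1r ?mul0r ?mulr1 ?mulr0.
Qed.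

Lemma Aalpha_sym alpha : (@Aalpha R T e alpha)^T = @Aalpha R T e alpha.
Proof.
apply/matrixP => c d; rewrite mxE !Aalpha_entry /Mf esym eq_sym.
by case: eqP => [->|]; rewrite ?mul0r.
Qed.

Lemma PPT k (f : 'I_k -> T -> R) i j : (Pm f *m (Pm f)^T) i j = ip (f i) (f j).
Proof.
rewrite mxE /ip -reidx; apply: eq_bigr => c _; by rewrite !mxE.
Qed.

Lemma trace_q k (f : 'I_k -> T -> R) alpha :
  \tr (Pm f *m @Aalpha R T e alpha *m (Pm f)^T) = \sum_i q alpha (f i).
Proof.
apply: eq_bigr => i _; rewrite mxE /q -reidx.
rewrite (eq_bigr (fun c => \sum_(d < #|T|) f i (enum_val d) *
   Mf alpha (enum_val d) (enum_val c) * f i (enum_val c))); last first.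
  move=> c _; rewrite !mxE mulr_suml; apply: eq_bigr => d _.
  by rewrite -[in RHS]Aalpha_entry !mxE.
rewrite exchange_big /=; apply: eq_bigr => d _; rewrite -reidx.
done.
Qed.

Lemma q_split alpha g : q alpha g = alpha * \sum_v (degree e v)%:R * (g v * g v)
  + (1 - alpha) * \sum_v \sum_w (e v w)%:R * g v * g w.
Proof.
rewrite /q !mulr_sumr -big_split /=; apply: eq_bigr => v _.
rewrite mulr_sumr.
rewrite (eq_bigr (fun w => (w == v)%:R * (alpha * (degree e v)%:R * (g v * g w))
   + (1 - alpha) * ((e v w)%:R * g v * g w))); last first.
  by move=> w _; rewrite /Mf eq_sym; ring.
by rewrite big_split /= sum_delta; congr (_ + _); ring.
Qed.

Lemma bip_edge x y : e x y -> (x \in X /\ y \notin X) \/ (x \notin X /\ y \in X).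
Proof.
case: bip => _ _ h /h [[hx hy]|[hx hy]]; [left|right]; rewrite -?inY //.
Qed.

Definition SX := [set p : T * T | (p.1 \in X) && e p.1 p.2].
Definition SY := [set p : T * T | (p.1 \notin X) && e p.1 p.2].

Lemma edges_le_X : (nedges e <= #|SX|)%N.
Proof.
rewrite /nedges; apply: leq_trans (leq_imset_card (fun p : T * T => [set p.1; p.2]) _).
apply: subset_leq_card; apply/subsetP => E.
rewrite inE => /existsP[x /existsP[y /andP[exy /eqP->]]].
case: (bip_edge exy) => [[hx hy]|[hx hy]]; apply/imsetP.
  by exists (x, y); rewrite // inE /= hx exy.
exists (y, x); first by rewrite inE /= hy esym exy.
by rewrite /= setUC.
Qed.

Lemma edges_le_Y : (nedges e <= #|SY|)%N.
Proof.
rewrite /nedges; apply: leq_trans (leq_imset_card (fun p : T * T => [set p.1; p.2]) _).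
apply: subset_leq_card; apply/subsetP => E.
rewrite inE => /existsP[x /existsP[y /andP[exy /eqP->]]].
case: (bip_edge exy) => [[hx hy]|[hx hy]]; apply/imsetP.
  exists (y, x); first by rewrite inE /= hy esym exy.
  by rewrite /= setUC.
by exists (x, y); rewrite // inE /= hx exy.
Qed.

Lemma NX_E : \sum_v (v \in X)%:R * (degree e v)%:R = #|SX|%:R :> R.
Proof.
rewrite /SX (cardS (fun v w => (v \in X) && e v w)); apply: eq_bigr => v _; rewrite degE mulr_sumr.
by apply: eq_bigr => w _; case: (v \in X); case: (e v w); rewrite ?mul1r ?mul0r.
Qed.

Lemma NY_E : \sum_v (v \notin X)%:R * (degree e v)%:R = #|SY|%:R :> R.
Proof.
rewrite /SY (cardS (fun v w => (v \notin X) && e v w)); apply: eq_bigr => v _; rewrite degE mulr_sumr.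
by apply: eq_bigr => w _; case: (v \in X); case: (e v w); rewrite ?mul1r ?mul0r.
Qed.

Definition x1 (a b : R) v := if v \in X then a else b.

Lemma ip_x1 a b : ip (x1 a b) (x1 a b) = a * a * #|X|%:R + b * b * #|Y|%:R.
Proof.
rewrite -!card_sum !mulr_sumr -big_split /=; apply: eq_bigr => v _.
by rewrite /x1 inY; case: (v \in X); rewrite /= ?mulr1 ?mulr0 ?addr0 ?add0r.
Qed.

Lemma q_x1 alpha a b : q alpha (x1 a b) =
  alpha * (a * a * #|SX|%:R + b * b * #|SY|%:R) +
  (1 - alpha) * (a * b * (#|SX|%:R + #|SY|%:R)).
Proof.
rewrite q_split -NX_E -NY_E; congr (_ * _ + _ * _).
  rewrite !mulr_sumr -big_split /=; apply: eq_bigr => v _.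
  by rewrite /x1; case: (v \in X); rewrite /=; ring.
rewrite -big_split /= mulr_sumr; apply: eq_bigr => v _.
rewrite degE -mulrDl mulr_sumr mulr_sumr; apply: eq_bigr => w _.
rewrite /x1; case ev: (e v w); last by rewrite /=; ring.
case: (bip_edge ev) => [[-> /negbTE ->]|[/negbTE -> ->]] /=; ring.
Qed.

Definition yv (a b : R) (u v : T) w := a * (w == u)%:R - b * (w == v)%:R.

Lemma ip_y a b u v h : ip (yv a b u v) h = a * h u - b * h v.
Proof.
rewrite /ip /yv (eq_bigr (fun w => a * ((w == u)%:R * h w) - b * ((w == v)%:R * h w))).
  by rewrite sumrB -!mulr_sumr !sum_delta.
by move=> w _; ring.
Qed.

Lemma yv_u a b u v : u != v -> yv a b u v u = a.
Proof. by move=> /negbTE uv; rewrite /yv eqxx uv /= mulr1n mulr0n; ring. Qed.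

Lemma yv_v a b u v : u != v -> yv a b u v v = - b.
Proof. by move=> uv; rewrite /yv eqxx eq_sym (negbTE uv) /= mulr1n mulr0n; ring. Qed.

Lemma q_y alpha a b u v : e u v ->
  q alpha (yv a b u v) =
  alpha * (a * a * (degree e u)%:R + b * b * (degree e v)%:R)
  - 2 * (1 - alpha) * a * b.
Proof.
move=> euv; have uv : u != v by apply: contraTneq euv => ->; rewrite eirr.
rewrite q_split.
have -> : \sum_v0 (degree e v0)%:R * (yv a b u v v0 * yv a b u v v0)
    = ip (yv a b u v) (fun w => (degree e w)%:R * yv a b u v w).
  by apply: eq_bigr => w _; ring.
rewrite ip_y yv_u // yv_v //.
have -> : \sum_v0 \sum_w (e v0 w)%:R * yv a b u v v0 * yv a b u v w
    = ip (yv a b u v) (fun z => ip (yv a b u v) (fun w => (e z w)%:R)).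
  apply: eq_bigr => z _; rewrite /ip mulr_sumr; apply: eq_bigr => w _; ring.
rewrite !ip_y !eirr (esym v u) euv /= mulr1n mulr0n; ring.
Qed.

Definition uf (x0 : T) (E : {set T}) := odflt x0 [pick z in E :&: X].
Definition vf (x0 : T) (E : {set T}) := odflt x0 [pick z in E :&: Y].

Lemma ends x0 E : E \in edges e ->
  [/\ uf x0 E \in X, vf x0 E \in Y, e (uf x0 E) (vf x0 E) & E = [set uf x0 E; vf x0 E]].
Proof.
rewrite inE => /existsP[x /existsP[y /andP[exy /eqP->]]].
have [x' [y' [hx hy ex' eE]]] : exists x' y', [/\ x' \in X, y' \in Y, e x' y'
    & [set x; y] = [set x'; y']].
  case: (bip_edge exy) => [[hx hy]|[hx hy]].
    by exists x, y; rewrite inY.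
  by exists y, x; rewrite inY esym setUC.
rewrite eE.
have nyX : y' \notin X by rewrite -inY.
have nxY : x' \notin Y by rewrite inY negbK.
have -> : uf x0 [set x'; y'] = x'.
  rewrite /uf; case: pickP => [z|/(_ x')]; last by rewrite !inE eqxx hx.
  rewrite !inE => /andP[/orP[/eqP->|/eqP->] hz] //.
  by rewrite hz in nyX.
have -> : vf x0 [set x'; y'] = y'.
  rewrite /vf; case: pickP => [z|/(_ y')]; last by rewrite !inE eqxx hy orbT.
  rewrite !inE => /andP[/orP[/eqP->|/eqP->] hz] //.
  by rewrite hz in nxY.
by [].
Qed.

End Graph.

Lemma final_arith (R : realFieldType) (al s t sg ta rh q2 m NX NY S K : R) :
  0 <= al -> al <= 1 -> 0 < sg -> 0 < ta -> 0 < rh -> 0 < q2 ->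
  sg * sg = s -> ta * ta = t -> rh * rh = s + t -> q2 * q2 = 2 ->
  m <= NX -> m <= NY ->
  K * (al - 2 * (1 - al) * ((sg / rh) * (ta / rh))) <= S ->
  al * m / 2 * (1 / s + 1 / t) + (1 - al) * m / (sg * ta)
    + K * (al - 2 * (1 - al) * (sg * ta) / (s + t))
  <= al * ((q2 * sg)^-1 * (q2 * sg)^-1 * NX + (q2 * ta)^-1 * (q2 * ta)^-1 * NY)
     + (1 - al) * ((q2 * sg)^-1 * (q2 * ta)^-1 * (NX + NY)) + S.
Proof.
move=> al0 al1 sg0 ta0 rh0 q0 <- <- hr hq mX mY hS.
have sgn : sg != 0 by rewrite gt_eqF.
have tan : ta != 0 by rewrite gt_eqF.
have rhn : rh != 0 by rewrite gt_eqF.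
have qn : q2 != 0 by rewrite gt_eqF.
have i1 : (q2 * sg)^-1 * (q2 * sg)^-1 = ((q2 * q2) * (sg * sg))^-1.
  by field; rewrite qn sgn.
have i2 : (q2 * ta)^-1 * (q2 * ta)^-1 = ((q2 * q2) * (ta * ta))^-1.
  by field; rewrite qn tan.
have i3 : (q2 * sg)^-1 * (q2 * ta)^-1 = ((q2 * q2) * (sg * ta))^-1.
  by field; rewrite qn sgn tan.
rewrite i1 i2 i3 hq.
have e1 : al * m / 2 * (1 / (sg * sg) + 1 / (ta * ta)) =
    al * ((2 * (sg * sg))^-1 * m + (2 * (ta * ta))^-1 * m).
  by field; rewrite sgn tan.
have e2 : (1 - al) * m / (sg * ta) = (1 - al) * ((2 * (sg * ta))^-1 * (m + m)).
  by field; rewrite sgn tan.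
have e3 : sg * ta / (sg * sg + ta * ta) = (sg / rh) * (ta / rh).
  rewrite -hr; field; rewrite rhn //.
rewrite e1 e2 -mulrA e3.
set A := (2 * (sg * sg))^-1.
set B := (2 * (ta * ta))^-1.
set C := (2 * (sg * ta))^-1.
have A0 : 0 <= A by rewrite /A invr_ge0 mulr_ge0 // mulr_ge0 // ltW.
have B0 : 0 <= B by rewrite /B invr_ge0 mulr_ge0 // mulr_ge0 // ltW.
have C0 : 0 <= C by rewrite /C invr_ge0 mulr_ge0 // mulr_ge0 // ltW.
have h1 : 0 <= al * (A * (NX - m)) by apply: mulr_ge0 => //; apply: mulr_ge0; lra.
have h2 : 0 <= al * (B * (NY - m)) by apply: mulr_ge0 => //; apply: mulr_ge0; lra.
have h3 : 0 <= (1 - al) * (C * ((NX - m) + (NY - m))).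
  by apply: mulr_ge0; [lra | apply: mulr_ge0 => //; lra].
lra.
Qed.


Lemma num1 (R : realFieldType) (q2 sg ta : R) : q2 * q2 = 2 -> q2 != 0 -> sg != 0 -> ta != 0 ->
  (q2 * sg)^-1 * (q2 * sg)^-1 * (sg * sg) + (q2 * ta)^-1 * (q2 * ta)^-1 * (ta * ta) = 1.
Proof.
move=> hq qn sgn tan.
have -> : (q2 * sg)^-1 * (q2 * sg)^-1 * (sg * sg) + (q2 * ta)^-1 * (q2 * ta)^-1 * (ta * ta)
  = (q2 * q2)^-1 + (q2 * q2)^-1 by field; rewrite qn sgn tan.
by rewrite hq; field.
Qed.

Lemma num2 (R : realFieldType) (q2 sg ta rh : R) : q2 != 0 -> sg != 0 -> ta != 0 -> rh != 0 ->
  sg / rh * (q2 * sg)^-1 - ta / rh * (q2 * ta)^-1 = 0.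
Proof. by move=> qn sgn tan rhn; field; rewrite qn sgn tan rhn. Qed.

Lemma num3 (R : realFieldType) (sg ta rh : R) : rh * rh = sg * sg + ta * ta -> rh != 0 ->
  sg / rh * (sg / rh) + ta / rh * (ta / rh) = 1.
Proof.
move=> hr rhn.
have -> : sg / rh * (sg / rh) + ta / rh * (ta / rh) = (sg * sg + ta * ta) / (rh * rh).
  by field.
by rewrite -hr divff // mulf_neq0.
Qed.

Unset Implicit Arguments.

Theorem theorem5p3 (R : realType) (T : finType) (e : rel T) (X Y : {set T})
  (alpha : R) (k : nat) (l : seq R) :
  simple_graph e -> connected_graph e -> bipartition e X Y ->
  (0 < #|X|)%N -> (0 < #|Y|)%N ->
  0 <= alpha -> alpha <= 1 ->
  (1 <= k)%N -> (k <= (matching_number e).+1)%N ->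
  eigen_list (@Aalpha R T e alpha) l ->
  let s : R := #|X|%:R in
  let t : R := #|Y|%:R in
  let m : R := (nedges e)%:R in
  alpha * m / 2 * (1 / s + 1 / t) + (1 - alpha) * m / Num.sqrt (s * t)
    + (k%:R - 1) * (alpha - 2 * (1 - alpha) * Num.sqrt (s * t) / (s + t))
  <= Sk l k.
Proof.
move=> [esym eirr] _ bip X0 Y0 al0 al1 k1 kb eig; cbv zeta.
have [Mt Mm Mc] : exists2 Mt : {set {set T}}, is_matching e Mt & #|Mt| = matching_number e.
  have ne : (0 < #|[pred M : {set {set T}} | is_matching e M]|)%N.
    apply/card_gt0P; exists set0; rewrite inE /is_matching sub0set /=.
    by apply/forallP => E; rewrite in_set0.
  have [M0 HM0 eqM] := eq_bigmax_cond (fun M : {set {set T}} => #|M|) ne.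
  by exists M0; [exact: HM0 | rewrite /matching_number eqM].
move: Mm; rewrite /is_matching => /andP[Msub /forallP Mdisj].
case: k k1 kb eig => // k' _ kb eig.
have kM : (k' <= #|Mt|)%N by rewrite Mc.
case/card_gt0P: (X0) => x0 _.
pose Es := enum Mt.
have szE : size Es = #|Mt| by rewrite cardE.
pose E p := nth set0 Es p.
have EM : forall p, (p < k')%N -> E p \in Mt.
  move=> p hp; rewrite -mem_enum; apply: mem_nth; rewrite szE.
  exact: leq_trans hp kM.
have Eedge : forall p, (p < k')%N -> E p \in edges e.
  by move=> p hp; apply: (subsetP Msub); apply: EM.
pose u p := uf X x0 (E p).
pose v p := vf Y x0 (E p).
have uvP : forall p, (p < k')%N ->
    [/\ u p \in X, v p \in Y, e (u p) (v p) & E p = [set u p; v p]].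
  by move=> p hp; exact: (ends esym bip x0 (Eedge p hp)).
have uv_ne : forall p, (p < k')%N -> u p != v p.
  move=> p hp; have [_ _ euv _] := uvP p hp.
  by apply: contraTneq euv => ->; rewrite eirr.
have Edisj : forall p p', (p < k')%N -> (p' < k')%N -> p != p' ->
    [disjoint E p & E p'].
  move=> p p' hp hp' ne.
  have := Mdisj (E p); rewrite EM // => /forallP/(_ (E p')).
  rewrite EM //= => /implyP; apply.
  rewrite /E nth_uniq ?enum_uniq // szE.
  - exact: leq_trans hp kM.
  - exact: leq_trans hp' kM.
have noth : forall p p', (p < k')%N -> (p' < k')%N -> p != p' ->
    (u p != u p') && (u p != v p') && (v p != u p') && (v p != v p').
  move=> p p' hp hp' ne.
  have [_ _ _ Ep] := uvP p hp; have [_ _ _ Ep'] := uvP p' hp'.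
  have hu : u p \notin E p'.
    by rewrite (disjointFr (Edisj p p' hp hp' ne)) // Ep !inE eqxx.
  have hv : v p \notin E p'.
    by rewrite (disjointFr (Edisj p p' hp hp' ne)) // Ep !inE eqxx orbT.
  by move: hu hv; rewrite Ep' !inE !negb_or => /andP[-> ->] /andP[-> ->].
have s0 : 0 < (#|X|%:R : R) by rewrite ltr0n.
have t0 : 0 < (#|Y|%:R : R) by rewrite ltr0n.
pose sg := Num.sqrt (#|X|%:R : R).
pose ta := Num.sqrt (#|Y|%:R : R).
pose rh := Num.sqrt (#|X|%:R + #|Y|%:R : R).
pose q2 := Num.sqrt (2 : R).
have sg0 : 0 < sg by rewrite sqrtr_gt0.
have ta0 : 0 < ta by rewrite sqrtr_gt0.
have rh0 : 0 < rh by rewrite sqrtr_gt0 addr_gt0.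
have q0 : 0 < q2 by rewrite sqrtr_gt0.
have sgn : sg != 0 by rewrite gt_eqF.
have tan : ta != 0 by rewrite gt_eqF.
have rhn : rh != 0 by rewrite gt_eqF.
have qn : q2 != 0 by rewrite gt_eqF.
have hs : sg * sg = #|X|%:R by rewrite -expr2 sqr_sqrtr // ltW.
have ht : ta * ta = #|Y|%:R by rewrite -expr2 sqr_sqrtr // ltW.
have hr : rh * rh = #|X|%:R + #|Y|%:R by rewrite -expr2 sqr_sqrtr // ltW // addr_gt0.
have hq : q2 * q2 = 2 by rewrite -expr2 sqr_sqrtr.
pose a0 := (q2 * sg)^-1.
pose b0 := (q2 * ta)^-1.
pose a1 := sg / rh.
pose b1 := ta / rh.
pose F (p : nat) := if p is p'.+1 then yv a1 b1 (u p') (v p') else x1 X a0 b0.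
pose f := fun i : 'I_k'.+1 => F i.
have n1 := num1 hq qn sgn tan.
have n2 := num2 qn sgn tan rhn.
have hr' : rh * rh = sg * sg + ta * ta by rewrite hr hs ht.
have n3 := num3 hr' rhn.
have PP : Pm f *m (Pm f)^T = 1%:M.
  apply/matrixP => i j; rewrite PPT mxE -(inj_eq val_inj) /=.
  case: i j => [[|p] hp] [[|p'] hp'] /=.
  - by rewrite /f /F /= (ip_x1 bip) -hs -ht.
  - have [uX vY _ _] := uvP p' hp'.
    have vX : v p' \notin X by rewrite -(inY bip).
    by rewrite /f /F /= ipC ip_y /x1 uX (negbTE vX) n2.
  - have [uX vY _ _] := uvP p hp.
    have vX : v p \notin X by rewrite -(inY bip).
    by rewrite /f /F /= ip_y /x1 uX (negbTE vX) n2.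
  - rewrite /f /F /= ip_y eqSS; case: (eqVneq p p') => [<-|ne].
      by rewrite yv_u ?yv_v ?uv_ne // mulrN opprK.
    have := noth p p' hp hp' ne.
    case/andP => /andP[/andP[h1 h2] h3] h4.
    by rewrite /yv (negbTE h1) (negbTE h2) (negbTE h3) (negbTE h4) /=; ring.
have Msym := Aalpha_sym esym alpha.
have tr := kyfan Msym eig PP (ltn0Sn k').
rewrite trace_q big_ord_recl in tr.
have fl : forall p : 'I_k', f (lift ord0 p) = yv a1 b1 (u p) (v p).
  by move=> p; rewrite /f lift0.
have eqS : \sum_(i < k') q e alpha (f (lift ord0 i)) =
    \sum_(p < k') q e alpha (yv a1 b1 (u p) (v p)).
  by apply: eq_bigr => p _; rewrite fl.
rewrite eqS in tr.
have f0 : f ord0 = x1 X a0 b0 by [].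
rewrite f0 in tr.
rewrite (q_x1 bip) in tr.
set S := \sum_(p < k') q e alpha (yv a1 b1 (u p) (v p)) in tr.
have hS : k'%:R * (alpha - 2 * (1 - alpha) * (sg / rh * (ta / rh))) <= S.
  have : \sum_(p < k') (alpha - 2 * (1 - alpha) * (sg / rh * (ta / rh))) <= S.
    apply: ler_sum => p _; have [_ _ euv _] := uvP p (ltn_ord p).
    rewrite (q_y esym eirr _ _ _ euv).
    have du : 1 <= (degree e (u p))%:R :> R.
      by rewrite ler1n; apply/card_gt0P; exists (v p); rewrite inE.
    have dv : 1 <= (degree e (v p))%:R :> R.
      by rewrite ler1n; apply/card_gt0P; exists (u p); rewrite inE esym.
    have h : a1 * a1 + b1 * b1 <= a1 * a1 * (degree e (u p))%:R + b1 * b1 * (degree e (v p))%:R.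
      by apply: lerD; rewrite -[X in X <= _]mulr1; apply: ler_wpM2l => //;
        rewrite -expr2 sqr_ge0.
    have := ler_wpM2l al0 h; rewrite /a1 /b1 n3 mulr1 => h2.
    rewrite /a1 /b1; lra.
  by rewrite sumr_const card_ord (mulr_natl _ k').
rewrite sqrtrM ?(ltW s0) // -/sg -/ta.
have -> : (k'.+1%:R : R) - 1 = k'%:R by rewrite mulrSr addrK.
apply: le_trans tr.
have mX : (nedges e)%:R <= #|SX e X|%:R :> R by rewrite ler_nat (edges_le_X esym bip).
have mY : (nedges e)%:R <= #|SY e X|%:R :> R by rewrite ler_nat (edges_le_Y esym bip).
exact: (final_arith al0 al1 sg0 ta0 rh0 q0 hs ht hr hq mX mY hS).
Qed.
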